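(* Let $G_1,G_2$ be groups with finite generating sets $S_1,S_2$ respectively (each symmetric and not containing the identity), and let $S=(S_1\times\{e\})\cup(\{e\}\times S_2)$ be the split generating set of $G_1\times G_2$. Then for all $(x,y)\in G_1\times G_2$, $$\mathrm{Av}((x,y))=\frac{|S_1|\,\mathrm{Av}(x)+|S_1|\,|y|+|S_2|\,|x|+|S_2|\,\mathrm{Av}(y)}{|S_1|+|S_2|},$$ where $\mathrm{Av}((x,y))$ is computed in $(G_1\times G_2,S)$, $\mathrm{Av}(x)$ and $|x|$ in $(G_1,S_1)$, and $\mathrm{Av}(y)$ and $|y|$ in $(G_2,S_2)$.
   Context: For a group $G$ with finite generating set $S$, $|x|$ denotes the word length of $x$ with respect to $S$, and $\mathrm{Av}(g)=\frac{1}{|S|}\sum_{a\in S}|a^{-1}ga|$. *)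

(* Defs.v *)
From Stdlib Require Import Reals List ClassicalEpsilon.
Import ListNotations.
Open Scope R_scope.

Record Grp := {
  gcar :> Type;
  gmul : gcar -> gcar -> gcar;
  ginv : gcar -> gcar;
  gone : gcar;
  gmulA : forall x y z, gmul x (gmul y z) = gmul (gmul x y) z;
  gmul1 : forall x, gmul gone x = x;
  gmulV : forall x, gmul (ginv x) x = gone
}.

Arguments gmul {g}.
Arguments ginv {g}.
Arguments gone {g}.

Definition prodGrp (G1 G2 : Grp) : Grp.
Proof.
  refine {| gcar := (G1 * G2)%type;
            gmul := fun p q => (gmul (fst p) (fst q), gmul (snd p) (snd q));
            ginv := fun p => (ginv (fst p), ginv (snd p));
            gone := (gone, gone) |}.
  - intros [a b] [c d] [e f]; simpl; now rewrite !gmulA.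
  - intros [a b]; simpl; now rewrite !gmul1.
  - intros [a b]; simpl; now rewrite !gmulV.
Defined.

Definition word_eval {G : Grp} (w : list G) : G :=
  fold_right (fun a acc => gmul a acc) gone w.

(* S is a finite symmetric generating set of G not containing the identity;
   the finite set is represented by a duplicate-free list. *)
Definition gen_set (G : Grp) (S : list G) : Prop :=
  NoDup S /\
  (forall a, In a S -> In (ginv a) S) /\
  ~ In gone S /\
  (forall x : G, exists w : list G, Forall (fun a => In a S) w /\ word_eval w = x).

Definition is_word_length (G : Grp) (S : list G) (x : G) (n : nat) : Prop :=
  (exists w : list G, Forall (fun a => In a S) w /\ word_eval w = x /\ length w = n) /\
  (forall w : list G, Forall (fun a => In a S) w -> word_eval w = x -> (n <= length w)%nat).

(* |x| : the word length (well defined when S generates G). *)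
Definition wlen (G : Grp) (S : list G) (x : G) : nat :=
  epsilon (inhabits 0%nat) (is_word_length G S x).

Definition Av (G : Grp) (S : list G) (g : G) : R :=
  / INR (length S) *
  fold_right Rplus 0 (map (fun a => INR (wlen G S (gmul (ginv a) (gmul g a)))) S).

Definition split_gen (G1 G2 : Grp) (S1 : list G1) (S2 : list G2) : list (prodGrp G1 G2) :=
  map (fun a => (a, gone) : prodGrp G1 G2) S1 ++ map (fun b => (gone, b) : prodGrp G1 G2) S2.

(* Main.v *)
Require Import Defs.
From Stdlib Require Import Reals List Arith Wf_nat Lia Lra Classical ClassicalEpsilon.
Import ListNotations.
Open Scope R_scope.

Section Aux.
Variable G : Grp.

Lemma gmulVr (x : G) : gmul x (ginv x) = gone.
Proof.
  set (y := ginv x).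
  rewrite <- (gmul1 G (gmul x y)).
  rewrite <- (gmulV G y) at 1.
  rewrite <- gmulA. rewrite (gmulA _ y x y).
  unfold y at 2 3. rewrite gmulV, gmul1. apply gmulV.
Qed.

Lemma gmul1r (x : G) : gmul x gone = x.
Proof.
  rewrite <- (gmulV G x), gmulA, gmulVr. apply gmul1.
Qed.

Lemma ginv1 : ginv (@gone G) = gone.
Proof. rewrite <- (gmul1r (ginv gone)). apply gmulV. Qed.

Lemma eval_app (l1 l2 : list G) :
  word_eval (l1 ++ l2) = gmul (word_eval l1) (word_eval l2).
Proof.
  induction l1; simpl. now rewrite gmul1.
  rewrite IHl1. apply gmulA.
Qed.

Lemma wlen_eq (S : list G) x n : is_word_length G S x n -> wlen G S x = n.
Proof.
  intros H.
  assert (Hs : is_word_length G S x (wlen G S x)).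
  { unfold wlen. apply epsilon_spec. now exists n. }
  destruct H as [[w [Hw1 [Hw2 Hw3]]] H2].
  destruct Hs as [[v [Hv1 [Hv2 Hv3]]] K2].
  specialize (H2 v Hv1 Hv2). specialize (K2 w Hw1 Hw2). lia.
Qed.

Lemma wlen_exists (S : list G) x (h : gen_set G S) :
  exists n, is_word_length G S x n.
Proof.
  destruct h as [_ [_ [_ Hg]]].
  destruct (Hg x) as [w [Hw1 Hw2]].
  assert (forall n, (exists w, Forall (fun a => In a S) w /\ word_eval w = x /\ length w = n)
                    -> exists m, is_word_length G S x m).
  { intro n. induction n as [n IH] using (well_founded_induction lt_wf).
    intros Hex.
    destruct (classic (forall w : list G, Forall (fun a => In a S) w -> word_eval w = x -> (n <= length w)%nat)) as [Hall|Hn].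
    - exists n. split; auto.
    - apply not_all_ex_not in Hn. destruct Hn as [v Hv].
      apply imply_to_and in Hv. destruct Hv as [Hv1 Hv].
      apply imply_to_and in Hv. destruct Hv as [Hv2 Hv].
      apply (IH (length v)). lia. exists v; auto. }
  apply (H (length w)). exists w; auto.
Qed.

Lemma wlen_spec (S : list G) x (h : gen_set G S) : is_word_length G S x (wlen G S x).
Proof.
  destruct (wlen_exists S x h) as [n Hn]. now rewrite (wlen_eq S x n Hn).
Qed.

End Aux.

Lemma eval_map1 (G1 G2 : Grp) (u : list G1) :
  @word_eval (prodGrp G1 G2) (map (fun a => (a, gone) : prodGrp G1 G2) u) = (word_eval u, gone).
Proof.
  induction u; simpl. reflexivity.
  unfold word_eval in *; simpl in *. rewrite IHu. simpl. now rewrite gmul1.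
Qed.

Lemma eval_map2 (G1 G2 : Grp) (u : list G2) :
  @word_eval (prodGrp G1 G2) (map (fun b => (gone, b) : prodGrp G1 G2) u) = (gone, word_eval u).
Proof.
  induction u; simpl. reflexivity.
  unfold word_eval in *; simpl in *. rewrite IHu. simpl. now rewrite gmul1.
Qed.
Lemma split_words (G1 G2 : Grp) (S1 : list G1) (S2 : list G2) (w : list (prodGrp G1 G2)) :
  Forall (fun a => In a (split_gen G1 G2 S1 S2)) w ->
  exists u1 u2, Forall (fun a => In a S1) u1 /\ Forall (fun a => In a S2) u2 /\
    word_eval u1 = fst (word_eval w) /\ word_eval u2 = snd (word_eval w) /\
    (length u1 + length u2 = length w)%nat.
Proof.
  induction w as [|c w IH]; intros Hf.
  - exists [], []. simpl. repeat split; auto.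
  - inversion Hf as [|? ? Hc Hw]; subst.
    destruct (IH Hw) as [u1 [u2 [A [B [C [D E]]]]]].
    unfold split_gen in Hc. apply in_app_or in Hc. destruct Hc as [Hc|Hc];
      apply in_map_iff in Hc; destruct Hc as [a [Ha Ha']]; subst c.
    + exists (a :: u1), u2. simpl. repeat split; auto;
      try (now rewrite C); try (now rewrite D, gmul1); lia.
    + exists u1, (a :: u2). simpl. repeat split; auto.
      now rewrite C, gmul1. now rewrite D. rewrite Nat.add_succ_r, E; reflexivity.
Qed.

Lemma wlen_prod (G1 G2 : Grp) (S1 : list G1) (S2 : list G2)
  (h1 : gen_set G1 S1) (h2 : gen_set G2 S2) (p : prodGrp G1 G2) :
  wlen (prodGrp G1 G2) (split_gen G1 G2 S1 S2) p = (wlen G1 S1 (fst p) + wlen G2 S2 (snd p))%nat.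
Proof.
  apply wlen_eq.
  destruct (wlen_spec G1 S1 (fst p) h1) as [[w1 [A1 [B1 C1]]] D1].
  destruct (wlen_spec G2 S2 (snd p) h2) as [[w2 [A2 [B2 C2]]] D2].
  split.
  - exists (map (fun a => (a, gone) : prodGrp G1 G2) w1 ++ map (fun b => (gone, b) : prodGrp G1 G2) w2).
    split; [|split].
    + apply Forall_app; split; apply Forall_forall; intros c Hc;
        apply in_map_iff in Hc; destruct Hc as [a [Ha Ha']]; subst c;
        unfold split_gen; apply in_or_app.
      * left. apply in_map_iff; exists a; split; [reflexivity|]. rewrite Forall_forall in A1; apply A1; assumption.
      * right. apply in_map_iff; exists a; split; [reflexivity|]. rewrite Forall_forall in A2; apply A2; assumption.
    + rewrite eval_app, eval_map1, eval_map2. simpl.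
      rewrite B1, B2, gmul1r, gmul1. now destruct p.
    + rewrite length_app, !length_map. lia.
  - intros w Hw Hev.
    destruct (split_words G1 G2 S1 S2 w Hw) as [u1 [u2 [A [B [C [D E]]]]]].
    rewrite Hev in C, D.
    specialize (D1 u1 A C). specialize (D2 u2 B D). lia.
Qed.

Notation sumR l := (fold_right Rplus 0 l).

Lemma sumR_app l1 l2 : sumR (l1 ++ l2) = sumR l1 + sumR l2.
Proof. induction l1; simpl. ring.  simpl. rewrite IHl1. ring. Qed.

Lemma sumR_addc {A} (f : A -> R) c l :
  sumR (map (fun a => f a + c) l) = sumR (map f l) + INR (length l) * c.
Proof.
  induction l.  simpl; ring.
   cbn [map length fold_right]. rewrite IHl, S_INR. ring.
Qed.

Lemma mul_av {A} (f : A -> R) l :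
  INR (length l) * (/ INR (length l) * sumR (map f l)) = sumR (map f l).
Proof.
  destruct l.  simpl; ring.
  simpl length. field. apply not_0_INR. discriminate.
Qed.

Theorem mainTheorem8 (G1 G2 : Grp) (S1 : list G1) (S2 : list G2)
  (h1 : gen_set G1 S1) (h2 : gen_set G2 S2) (x : G1) (y : G2) :
  Av (prodGrp G1 G2) (split_gen G1 G2 S1 S2) (x, y) =
  (INR (length S1) * Av G1 S1 x + INR (length S1) * INR (wlen G2 S2 y)
   + INR (length S2) * INR (wlen G1 S1 x) + INR (length S2) * Av G2 S2 y)
  / (INR (length S1) + INR (length S2)).
Proof.
  unfold Av.
  rewrite !mul_av.
  assert (Hl : length (split_gen G1 G2 S1 S2) = (length S1 + length S2)%nat).
  { unfold split_gen. now rewrite length_app, !length_map. }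
  rewrite Hl, plus_INR.
  unfold split_gen at 2. rewrite map_app, !map_map, sumR_app.
  erewrite map_ext with (l := S1).
  2:{ intro a. rewrite wlen_prod by assumption. simpl.
      rewrite ginv1, gmul1r, gmul1, plus_INR. reflexivity. }
  erewrite map_ext with (l := S2).
  2:{ intro a. rewrite wlen_prod by assumption. simpl.
      rewrite ginv1, gmul1r, gmul1, plus_INR. reflexivity. }
  rewrite sumR_addc.
  rewrite (map_ext (fun a => INR (wlen G1 S1 x) + INR (wlen G2 S2 (gmul (ginv a) (gmul y a))))
                   (fun a => INR (wlen G2 S2 (gmul (ginv a) (gmul y a))) + INR (wlen G1 S1 x)))
    by (intro; ring).
  rewrite sumR_addc. unfold Rdiv. ring.
Qed.
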